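(* Let $\Delta \ge 1$ be odd. There is a port numbering of the complete graph $K_{\Delta+1}$ (nodes anonymous, no orientation) such that every deterministic distributed algorithm (with any number of rounds) that outputs a dominating set outputs all $\Delta+1$ nodes, whereas a single node is a dominating set. Consequently, with anonymous nodes, a port numbering but no orientation, no deterministic distributed algorithm for minimum dominating set on graphs of maximum degree $\Delta$ has approximation factor smaller than $\Delta+1$.
   Context: Model: a graph is a distributed system; every node runs the same deterministic algorithm. Communication is synchronous: in each round every node receives messages from its neighbours, performs local computation, and sends messages to its neighbours. Each node knows its degree and the global degree bound $\Delta$, and nodes have no identifiers. A port numbering means each node $v$ has a fixed bijection between its incident edges and $\{1,\dots,\deg(v)\}$, known to it; messages are sent and received through numbered ports. An algorithm has approximation factor $\alpha$ for minimum dominating set if its output is always a dominating set of size at most $\alpha$ times the minimum. *)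

(* Defs.v *)
From HB Require Import structures.
From mathcomp Require Import all_boot all_order all_algebra.
Unset Printing Implicit Defensive.
Import Order.TTheory GRing.Theory Num.Theory.

(* Node v has degree [deg v] and ports
   0, ..., deg v - 1 (the paper's ports 1..deg v, shifted by one).
   [pn v i = (u, j)] means: port i of v is connected to port j of u. *)
Definition valid_pn {V : finType} (deg : V -> nat) (pn : V -> nat -> V * nat) : Prop :=
  (forall v i, i < deg v ->
     (pn v i).2 < deg (pn v i).1 /\
     pn (pn v i).1 (pn v i).2 = (v, i) /\
     (pn v i).1 != v) /\
  (forall v i i', i < deg v -> i' < deg v -> (pn v i).1 = (pn v i').1 -> i = i').

Definition adj {V : finType} (deg : V -> nat) (pn : V -> nat -> V * nat) (v u : V) : bool :=
  [exists i : 'I_(deg v), (pn v i).1 == u].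

Definition dominating {V : finType} (e : V -> V -> bool) (D : {set V}) : bool :=
  [forall v, (v \in D) || [exists u in D, e u v]].

Definition domnum {V : finType} (e : V -> V -> bool) : nat :=
  \big[minn/#|V|]_(D : {set V} | dominating e D) #|D|.

(* A node starts in a state determined by its degree; in each round it sends
   [send s i] through each port i, receives the messages on its ports
   (Some m for a port i < degree, None otherwise) and updates its state. *)
Record Algorithm : Type := Algo {
  St : Type;
  Msg : Type;
  init : nat -> St;
  send : St -> nat -> Msg;
  step : St -> (nat -> option Msg) -> St;
  out : St -> bool
}.

Fixpoint run (A : Algorithm) {V : finType} (deg : V -> nat)
    (pn : V -> nat -> V * nat) (r : nat) : V -> St A :=
  match r with
  | 0 => fun v => init A (deg v)
  | r'.+1 => fun v =>
      let st := run A deg pn r' in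
      step A (st v) (fun i => if i < deg v then
                                Some (send A (st (pn v i).1) (pn v i).2)
                              else None)
  end.

Definition output (A : Algorithm) {V : finType} (deg : V -> nat)
    (pn : V -> nat -> V * nat) (r : nat) : {set V} :=
  [set v | out A (run A deg pn r v)].

Definition has_approx_factor (Delta : nat) (A : Algorithm) (alpha : rat) : Prop :=
  forall (V : finType) (deg : V -> nat) (pn : V -> nat -> V * nat),
    valid_pn deg pn -> (forall v, deg v <= Delta) ->
    exists r : nat,
      dominating (adj deg pn) (output A deg pn r) /\
      ((#|output A deg pn r|)%:R <= alpha * (domnum (adj deg pn))%:R)%R.

(* Main.v *)
Require Import Defs.
From mathcomp Require Import all_boot all_order all_algebra.
From Stdlib Require Import FunctionalExtensionality.
Import Order.TTheory GRing.Theory Num.Theory.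

Section G.
Variable D : nat.
Hypothesis hD : 0 < D.
Hypothesis hodd : odd D.

Definition g (i v : nat) : nat :=
  if v == D then (i * D.+1./2) %% D
  else if (v * 2) %% D == i then D
  else (i + D - v) %% D.

Lemma h2 x : x * D.+1./2 * 2 = x %[mod D].
Proof.
rewrite -mulnA muln2 even_halfK /=; last by rewrite negbK.
by rewrite mulnS addnC modnMDl.
Qed.

Lemma sub_spec i v : v < D -> (i + D - v) %% D + v = i %[mod D].
Proof.
move=> hv; rewrite modnDml subnK; first by rewrite modnDr.
by apply: leq_trans (ltnW hv) (leq_addl _ _).
Qed.

Lemma canc a b v : a < D -> b < D -> a + v = b + v %[mod D] -> a = b.
Proof.
move=> ha hb /eqP; rewrite eqn_modDr !modn_small //; by move/eqP.
Qed.

Lemma ltmod x : x %% D < D. Proof. by rewrite ltn_mod. Qed.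

Lemma gle i v : g i v <= D.
Proof. rewrite /g; case: ifP => _; first exact: ltnW (ltmod _).
case: ifP => _ //; exact: ltnW (ltmod _). Qed.

Lemma gneq i v : i < D -> v <= D -> g i v != v.
Proof.
move=> hi hv; rewrite /g; case: (eqVneq v D) => [->|nvD].
  by rewrite neq_ltn ltmod.
have vD : v < D by rewrite ltn_neqAle nvD.
case: ifP => h; first by rewrite eq_sym.
apply/eqP => E; move/negbT: h; apply/negP/negPn.
have := sub_spec i _ vD; rewrite E => e.
by rewrite muln2 -addnn e modn_small.
Qed.

Lemma ginv i v : i < D -> v <= D -> g i (g i v) = v.
Proof.
move=> hi hv; rewrite {2}/g; case: (eqVneq v D) => [->|nvD].
  rewrite /g (ltn_eqF (ltmod _)).
  by rewrite modnMml h2 (modn_small hi) eqxx.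
have vD : v < D by rewrite ltn_neqAle nvD.
case: ifP => h.
  rewrite /g eqxx; move/eqP: h => <-.
  by rewrite modnMml mulnAC h2 modn_small.
set w := (i + D - v) %% D.
have wD : w < D by exact: ltmod.
rewrite /g (ltn_eqF wD).
case: ifP => h'.
  exfalso; move/negbT: h; apply/negP; apply/negPn.
  move/eqP: h' => h'.
  have e1 := sub_spec i _ vD.
  apply/eqP; apply: (@canc _ _ (w + w)).
  - exact: ltmod.
  - done.
  rewrite [in RHS]addnn -muln2 -[in RHS]modnDmr h'.
  by rewrite modnDml muln2 -addnn addnACA (addnC v) -modnDm e1 modnDm.
apply: (@canc _ _ w) => //; first exact: ltmod.
by rewrite (sub_spec i w wD) addnC /w (sub_spec i v vD).
Qed.

Lemma ginj i i' v : i < D -> i' < D -> v <= D -> g i v = g i' v -> i = i'.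
Proof.
move=> hi hi' hv; rewrite /g; case: (eqVneq v D) => [_|nvD].
  move=> E; rewrite -(modn_small hi) -(modn_small hi') -(h2 i) -(h2 i').
  by rewrite -modnMml E modnMml.
have vD : v < D by rewrite ltn_neqAle nvD.
case: ifP => h1; case: ifP => h2'.
- by move=> _; move/eqP: h1 => <-; move/eqP: h2' => <-.
- by move=> E; have := ltmod (i' + D - v); rewrite -E ltnn.
- by move=> E; have := ltmod (i + D - v); rewrite E ltnn.
move=> E.
rewrite -(modn_small hi) -(modn_small hi') -(sub_spec i v vD) -(sub_spec i' v vD).
by rewrite E.
Qed.

Lemma gsurj u v : u <= D -> v <= D -> u != v -> exists2 i, i < D & g i v = u.
Proof.
move=> hu hv nuv; case: (eqVneq v D) => [vE|nvD].
  have uD : u < D by rewrite ltn_neqAle hu andbT -vE.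
  exists ((u * 2) %% D); first exact: ltmod.
  by rewrite /g vE eqxx modnMml mulnAC h2 modn_small.
have vD : v < D by rewrite ltn_neqAle nvD.
case: (eqVneq u D) => [uE|nuD].
  exists ((v * 2) %% D); first exact: ltmod.
  by rewrite /g (negbTE nvD) eqxx uE.
have uD : u < D by rewrite ltn_neqAle nuD.
exists ((u + v) %% D); first exact: ltmod.
rewrite /g (negbTE nvD); case: ifP => h.
  exfalso; move: h; rewrite muln2 -addnn eqn_modDr !modn_small //.
  by rewrite eq_sym (negbTE nuv).
apply: (@canc _ _ v) => //; first exact: ltmod.
by rewrite sub_spec // modn_mod.
Qed.
End G.

Lemma bigmin_le_seq (I : eqType) (r : seq I) (P : pred I) (F : I -> nat) x j :
  j \in r -> P j -> \big[minn/x]_(i <- r | P i) F i <= F j.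
Proof.
elim: r => // a r IH; rewrite in_cons big_cons => /orP [/eqP ->|jr] Pj.
  by rewrite Pj; exact: geq_minl.
case: (P a); last exact: IH.
exact: leq_trans (geq_minr _ _) (IH jr Pj).
Qed.

Lemma run_const (A : Algorithm) (V : finType) (d : nat) (pn : V -> nat -> V * nat) (w : V) :
  (forall v i, (pn v i).2 = i) ->
  forall r v, run A (fun _ => d) pn r v = run A (fun _ => d) pn r w.
Proof.
move=> hp; elim => [//|r IH] v /=.
rewrite (IH v); congr (step A _ _); apply: functional_extensionality => i.
by rewrite !hp (IH (pn v i).1) (IH (pn w i).1).
Qed.

Section Main.
Variable Delta : nat.
Hypothesis hD : 0 < Delta.
Hypothesis hodd : odd Delta.

Definition pnK (v : 'I_Delta.+1) (i : nat) : 'I_Delta.+1 * nat :=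
  (inord (g Delta i v), i).

Lemma vle (v : 'I_Delta.+1) : v <= Delta.
Proof. by rewrite -ltnS ltn_ord. Qed.

Lemma pnK_neq v i : i < Delta -> (pnK v i).1 != v.
Proof.
move=> hi; apply/eqP => E; have := congr1 val E; rewrite /= inordK; last by rewrite ltnS gle.
by move/eqP; rewrite (negbTE (@gneq Delta hD i v hi (vle v))).
Qed.

Lemma pnK_valid : valid_pn (fun _ => Delta) pnK.
Proof.
split.
  move=> v i hi; split => //; split; last exact: pnK_neq.
  rewrite /pnK /=; congr pair; apply: val_inj => /=.
  rewrite inordK; last by rewrite ltnS gle.
  rewrite inordK ?ginv //; last by rewrite ltnS gle.
  exact: vle.
move=> v i i' hi hi' /= E; have := congr1 val E; rewrite /= !inordK ?ltnS ?gle //.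
by apply: ginj => //; exact: vle.
Qed.

Lemma pnK_adj u v : adj (fun _ => Delta) pnK u v = (u != v).
Proof.
apply/existsP/idP => [[i /eqP <-]|nuv].
  by rewrite eq_sym pnK_neq.
have nvu : val v != val u by rewrite eq_sym.
have [i hi E] := @gsurj Delta hD hodd _ _ (vle v) (vle u) nvu.
exists (Ordinal hi); apply/eqP; apply: val_inj; rewrite /= inordK // E; exact: vle.
Qed.

Lemma pnK_all (A : Algorithm) (r : nat) :
  dominating (adj (fun _ => Delta) pnK) (output A (fun _ => Delta) pnK r) ->
  output A (fun _ => Delta) pnK r = setT.
Proof.
have hp : forall v i, (pnK v i).2 = i by [].
move=> Hd; apply/setP => x; rewrite in_setT.
move/forallP/(_ x): Hd; case/orP => // /existsP [u /andP [hu _]].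
by move: hu; rewrite !inE (run_const _ _ _ _ x hp).
Qed.

Lemma pnK_single : dominating (adj (fun _ => Delta) pnK) [set ord0].
Proof.
apply/forallP => x; rewrite in_set1; case: eqVneq => //= h.
by apply/existsP; exists ord0; rewrite in_set1 eqxx pnK_adj eq_sym h.
Qed.

End Main.

Theorem mainTheorem8 (Delta : nat) (hD : 0 < Delta) (hodd : odd Delta) :
  (exists pn : 'I_Delta.+1 -> nat -> 'I_Delta.+1 * nat,
     valid_pn (fun _ => Delta) pn /\
     (forall u v, adj (fun _ => Delta) pn u v = (u != v)) /\
     (forall (A : Algorithm) (r : nat),
        dominating (adj (fun _ => Delta) pn) (output A (fun _ => Delta) pn r) ->
        output A (fun _ => Delta) pn r = setT) /\
     (exists v : 'I_Delta.+1, dominating (adj (fun _ => Delta) pn) [set v])) /\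
  (forall (A : Algorithm) (alpha : rat),
     has_approx_factor Delta A alpha -> ((Delta.+1)%:R <= alpha)%R).
Proof.
split.
  exists (pnK Delta); split; first exact: pnK_valid.
  split; first exact: pnK_adj.
  split; first exact: pnK_all.
  by exists ord0; exact: pnK_single.
move=> A alpha H.
have [r [Hd Hle]] := H _ _ _ (@pnK_valid Delta hD hodd) (fun _ => leqnn Delta).
move: Hle; rewrite pnK_all // cardsT card_ord.
have : domnum (adj (fun _ => Delta) (pnK Delta)) <= 1.
  rewrite /domnum.
  have -> : 1 = #|[set (ord0 : 'I_Delta.+1)]| by rewrite cards1.
  apply: bigmin_le_seq; first exact: mem_index_enum.
  exact: pnK_single.
case: (domnum _) => [_|[_|//]].
  by rewrite mulr0 lern0.
by rewrite mulr1.
Qed.
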